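(* Let $(P_n)_n$ be a sequence of pairwise distinct polynomials in $\mathbb{Z}[X_1,\dots,X_m]$ such that $\sup_n \deg P_n<\infty$. Then there exist complex numbers $\xi_1,\dots,\xi_m$, algebraically independent (over $\mathbb{Q}$), such that the sequence $(|P_n(\xi_1,\dots,\xi_m)|)_n$ is unbounded.
   Context: $\deg$ denotes total degree. *)

(* Defs.v *)
From HB Require Import structures.
From mathcomp Require Import all_boot all_order all_algebra.
From mathcomp Require Import mpoly.
From mathcomp Require Import complex.
From mathcomp Require Import Rstruct.
From Stdlib Require Import Rdefinitions.
Set Implicit Arguments. Unset Strict Implicit. Unset Printing Implicit Defensive.
Import Order.TTheory GRing.Theory Num.Theory.
Local Open Scope ring_scope.

Definition C : Type := complex Rdefinitions.R.

Definition evalZ (m : nat) (P : {mpoly int[m]}) (xi : 'I_m -> C) : C :=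
  (map_mpoly (intr : int -> C) P).@[xi].

Definition alg_indep_Q (m : nat) (xi : 'I_m -> C) : Prop :=
  forall p : {mpoly rat[m]}, p != 0 -> (map_mpoly (ratr : rat -> C) p).@[xi] != 0.

(* Main.v *)
Require Import Defs.
From HB Require Import structures.
From mathcomp Require Import all_boot all_order all_algebra.
From mathcomp Require Import mpoly complex Rstruct.
From Stdlib Require Import Rdefinitions.
From Stdlib Require Import Raxioms.
Set Implicit Arguments. Unset Strict Implicit. Unset Printing Implicit Defensive.
Import Order.TTheory GRing.Theory Num.Theory.
Local Open Scope ring_scope.
From mathcomp Require Import lra zify.
Section P1.
Variable u : nat -> R.
Definition stepI (ab : R * R) (n : nat) : R * R :=
  let a := ab.1 in let b := ab.2 in
  let a' := a + (b - a) / 3%:R in let b' := b - (b - a) / 3%:R in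
  if u n <= a' then (b', b) else (a, a').
Fixpoint Iseq (k : nat) : R * R :=
  match k with 0 => (0, 1) | k'.+1 => stepI (Iseq k') k' end.

Lemma stepP (a b : R) n : a < b -> let ab' := stepI (a, b) n in
  [/\ ab'.1 < ab'.2, a <= ab'.1, ab'.2 <= b &
   (u n < ab'.1) || (ab'.2 < u n)].
Proof.
move=> ab; rewrite /stepI /=.
case: ifP => H /=; split; lra.
Qed.

Lemma Iseq_step (k : nat) : [/\ (Iseq k).1 < (Iseq k).2,
   (Iseq k).1 <= (Iseq k.+1).1, (Iseq k.+1).2 <= (Iseq k).2 &
   (u k < (Iseq k.+1).1) || ((Iseq k.+1).2 < u k)].
Proof.
have lt : forall k, (Iseq k).1 < (Iseq k).2.
  move=> {k}; elim=> [|k IH] /=; first by rewrite ltr01.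
  by case: (Iseq k) IH => a b IH; case: (stepP k IH).
move: (lt k); rewrite [Iseq k.+1]/=; case: (Iseq k) => a b /= H.
by case: (stepP k H).
Qed.

Lemma Iseq_mono (k l : nat) : leq k l ->
  (Iseq k).1 <= (Iseq l).1 /\ (Iseq l).2 <= (Iseq k).2.
Proof.
move=> /subnK <-; elim: (l - k)%nat => [|j [IH1 IH2]]; first by rewrite add0n.
rewrite addSn; case: (Iseq_step (j + k)) => _ h1 h2 _.
split; [exact: le_trans h1 | exact: le_trans IH2].
Qed.

Lemma Iseq_le (k l : nat) : (Iseq k).1 <= (Iseq l).2.
Proof.
case: (leqP k l) => [kl|/ltnW lk].
  case: (Iseq_mono kl) => h1 h2; case: (Iseq_step l) => h _ _ _.
  apply: le_trans h1 _; exact: ltW.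
case: (Iseq_mono lk) => h1 h2; case: (Iseq_step k) => h _ _ _.
apply: le_trans h2; exact: ltW.
Qed.

Lemma R_avoid : exists x : R, forall n, x <> u n.
Proof.
pose E := fun r : R => exists k, r = (Iseq k).1.
have bE : bound E.
  exists (Iseq 0).2 => r [k ->]; apply/RleP; exact: Iseq_le.
have nE : exists x, E x by exists (Iseq 0).1, 0%nat.
case: (completeness E bE nE) => x [ub lub].
have h1 k : (Iseq k).1 <= x by apply/RleP; apply: ub; exists k.
have h2 k : x <= (Iseq k).2.
  apply/RleP; apply: lub => r [l ->]; apply/RleP; exact: Iseq_le.
exists x => n e.
case: (Iseq_step n) => _ _ _ /orP [] H.
  by have := h1 n.+1; rewrite e leNgt H.
by have := h2 n.+1; rewrite e leNgt H.
Qed.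
End P1.
Definition ext n (x' : 'I_n -> C) (t : C) : 'I_n.+1 -> C :=
  fun i => if unlift ord_max i is Some j then x' j else t.

Lemma ext_widen n (x' : 'I_n -> C) t i : ext x' t (widen_ord (leqnSn n) i) = x' i.
Proof.
have -> : widen_ord (leqnSn n) i = lift ord_max i by apply: ord_inj; rewrite lift_max.
by rewrite /ext liftK.
Qed.

Lemma ext_max n (x' : 'I_n -> C) t : ext x' t ord_max = t.
Proof. by rewrite /ext unlift_none. Qed.

Lemma muni_eval n (p : {mpoly C[n.+1]}) (x' : 'I_n -> C) t :
  (map_poly (meval x') (muni p)).[t] = p.@[ext x' t].
Proof.
rewrite muniE mevalE raddf_sum horner_sum; apply: eq_bigr => m _.
rewrite /= map_polyZ map_polyXn hornerZ hornerXn /=.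

rewrite mevalZ mevalX big_ord_recr /= ext_max mulrA; congr (_ * _ * _).
by apply: eq_bigr => i _; rewrite mnmE ext_widen.
Qed.

Lemma muni_neq0 n (p : {mpoly C[n.+1]}) : p != 0 -> muni p != 0.
Proof.
move=> p0; have [m0 m0s] : exists m0, m0 \in msupp p.
  by case E: (msupp p) => [|a s]; [move: p0; rewrite -msupp_eq0 E | exists a; rewrite inE eqxx].
apply/eqP => /(congr1 (fun q : {poly {mpoly C[n]}} => (q`_(m0 ord_max))@_([multinom m0 (widen_ord (leqnSn n) i) | i < n]))).
rewrite muniE coef_sumMXn coef0 mcoeff0 raddf_sum /=.
rewrite (big_rem m0) //= eqxx /= mcoeffZ mcoeffX eqxx mulr1 big1_seq.
  by rewrite addr0 => /eqP; rewrite mcoeff_eq0 m0s.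
move=> m /andP [/eqP mk mr]; rewrite mcoeffZ mcoeffX.
case: eqP => [e|]; last by rewrite mulr0.
have mm0 : m = m0.
  apply/mnmP => i; case: (unliftP ord_max i) => [j ->|->]; last by [].
  have := congr1 (fun mu : 'X_{1..n} => mu j) e; rewrite !mnmE.
  have -> : lift ord_max j = widen_ord (leqnSn n) j by apply: ord_inj; rewrite lift_max.
  by [].
by move: mr; rewrite mm0 mem_rem_uniqF // msupp_uniq.
Qed.
Lemma avoid n : forall (I : countType) (f : I -> {mpoly C[n]}),
  (forall i, f i != 0) -> exists x : 'I_n -> C, forall i, (f i).@[x] != 0.
Proof.
elim: n => [|n IH] I f fnz.
  exists (fun _ => 0) => i; rewrite (nvar0_mpolyC (f i)) mevalC.
  apply: contra (fnz i) => /eqP e; apply/eqP; rewrite (nvar0_mpolyC (f i)) e.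
  exact: mpolyC0.
pose g (ij : (I * nat)%type) : {mpoly C[n]} :=
  if (muni (f ij.1))`_ij.2 == 0 then 1 else (muni (f ij.1))`_ij.2.
have gnz ij : g ij != 0 by rewrite /g; case: ifP => [_|/negbT //]; rewrite oner_eq0.
have [x' hx'] := IH _ g gnz.
pose G i := map_poly (meval x') (muni (f i)).
have Gnz i : G i != 0.
  have q0 := muni_neq0 (fnz i).
  set j := (size (muni (f i))).-1.
  have cj : (muni (f i))`_j != 0 by rewrite -/(lead_coef _) lead_coef_eq0.
  apply/eqP => /(congr1 (fun q : {poly C} => q`_j)); rewrite coef_map coef0 /=.
  by move: (hx' (i, j)); rewrite /g /= (negbTE cj) => /eqP h /h.

pose s i := projT1 (dec_factor_theorem (G i)).
have sP (i : I) (t : C) : root (G i) t -> t \in s i.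
  rewrite /s; case: (dec_factor_theorem (G i)) => /= l [q [e hq]].
  have qnz : q != 0 by apply: contra (Gnz i) => /eqP q0; rewrite e q0 mul0r.
  by rewrite e rootM root_prod_XsubC (negbTE (hq qnz t)).
pose u (k : nat) : R := match @pickle_inv (I * nat)%type k with
  | Some ij => complex.Re (nth 0 (s ij.1) ij.2) | None => 0 end.
have [r hr] := R_avoid u.
exists (ext x' (r%:C)%C) => i; rewrite -muni_eval.
apply/negP => /(sP i) ts.
apply: (hr (pickle (i, index (r%:C)%C (s i)))).
by rewrite /u pickleK_inv /= nth_index.
Qed.
Definition build m (s : seq (rat * 'X_{1..m})) : {mpoly rat[m]} :=
  \sum_(cm <- s) cm.1 *: 'X_[cm.2].

Lemma build_eq m (p : {mpoly rat[m]}) : build [seq (p@_mm, mm) | mm <- msupp p] = p.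
Proof. by rewrite /build big_map /= -mpolyE. Qed.

Lemma map_ratr_neq0 m (p : {mpoly rat[m]}) : p != 0 -> map_mpoly (ratr : rat -> C) p != 0.
Proof.
move=> p0; apply: contra p0 => /eqP e; apply/eqP/mpolyP => mm.
have := congr1 (mcoeff mm) e; rewrite mcoeff_map_mpoly mcoeff0 => /eqP.
rewrite fmorph_eq0 => /eqP ->; by rewrite mcoeff0.
Qed.
Definition shiftz (c : int) (b : nat) : int := c + b%:Z.
Lemma shiftz_le (c : int) (b : nat) : leq (absz c) b -> leq (absz (shiftz c b)) (b + b).
Proof. move=> h. rewrite /shiftz. lia. Qed.
Lemma shiftz_inj (c1 c2 : int) (b : nat) : leq (absz c1) b -> leq (absz c2) b ->
  absz (shiftz c1 b) = absz (shiftz c2 b) -> c1 = c2.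
Proof. move=> h1 h2 e. rewrite /shiftz in e. lia. Qed.

Section Main.
Variables (m d : nat) (P : nat -> {mpoly int[m]}).
Hypothesis Pinj : injective P.
Hypothesis Pd : forall n, leq (msize (P n)) d.

Local Notation T := ('X_{1..m < d}).
Local Notation N := #|{: T}|.
Definition ev (k : 'I_N) : 'X_{1..m} := bmnm (enum_val k).

Lemma ev_inj : injective ev.
Proof. by move=> k1 k2 /val_inj /enum_val_inj. Qed.

Definition coefv (p : {mpoly int[m]}) : 'rV[C]_N := \row_k ((p@_(ev k))%:~R).
Definition monv (x : 'I_m -> C) : 'rV[C]_N := \row_k (\prod_i x i ^+ ev k i).
Definition dot (a b : 'rV[C]_N) : C := (a *m b^T) 0 0.

Lemma dotE a b : dot a b = \sum_k a 0 k * b 0 k.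
Proof. by rewrite /dot !mxE; apply: eq_bigr => k _; rewrite mxE. Qed.

Lemma evalZ_dot p x : leq (msize p) d -> evalZ p x = dot (coefv p) (monv x).
Proof.
move=> pd; rewrite /evalZ (map_mpolyE _ pd) dotE raddf_sum /=.
rewrite (big_enum_val (fun t : T => _)) /=.
apply: eq_bigr => k _; rewrite !mxE mevalZ mevalX.
by [].
Qed.

Definition Wp (w : 'rV[C]_N) : Prop :=
  exists B : C, forall n, `|dot (coefv (P n)) w| <= B.

Lemma Wp0 : Wp 0.
Proof. by exists 0 => n; rewrite /dot trmx0 mulmx0 mxE normr0. Qed.

Lemma WpD u v : Wp u -> Wp v -> Wp (u + v).
Proof.
rewrite /Wp; move=> [B1 h1] [B2 h2]; exists (B1 + B2) => n.
rewrite /dot linearD /= mulmxDr mxE.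
apply: le_trans (ler_normD _ _) _; apply: lerD; [exact: h1 | exact: h2].
Qed.

Lemma WpZ a u : Wp u -> Wp (a *: u).
Proof.
rewrite /Wp; move=> [B h]; exists (`|a| * B) => n.
rewrite /dot linearZ /= -scalemxAr mxE normrM.
apply: ler_wpM2l; [exact: normr_ge0 | exact: h].
Qed.

Lemma span_exists : exists A : 'M[C]_N,
  (forall u : 'rV_N, (u <= A)%MS -> Wp u) /\ (forall w, Wp w -> (w <= A)%MS).
Proof.
apply: Classical_Prop.NNPP => H.
suff: forall k, exists A : 'M[C]_N, (forall u : 'rV_N, (u <= A)%MS -> Wp u) /\ leq k (\rank A).
  move=> /(_ N.+1) [A [_ hA]]; have := rank_leq_col A.
  by move=> /(leq_trans hA); rewrite ltnn.
elim=> [|k [A [QA kA]]].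
  exists 0; split => // u; rewrite submx0 => /eqP ->; exact: Wp0.
have [w [Ww wA]] : exists w, Wp w /\ ~~ (w <= A)%MS.
  apply: Classical_Prop.NNPP => H2; apply: H; exists A; split => // w Ww.
  apply: Classical_Prop.NNPP => H3; apply: H2; exists w; split => //.
  by apply/negP.
exists (A + w)%MS; split.
  move=> u /sub_addsmxP [[u1 u2] /= ->]; apply: WpD.
    by apply: QA; exact: submxMl.
  have /sub_rVP [a ->] : (u2 *m w <= w)%MS by exact: submxMl.
  exact: WpZ.
apply: leq_ltn_trans kA (rank_ltmx _).
rewrite ltmxE addsmxSl /=; apply: contra wA => h.
exact: submx_trans (addsmxSr _ _) h.
Qed.

Lemma dot_delta c k : dot c (delta_mx 0 k) = c 0 k.
Proof.
rewrite dotE (bigD1 k) //= big1 => [|j jk]; rewrite !mxE ?eqxx ?mulr1 ?addr0 //.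
by rewrite (negbTE jk) andbF mulr0.
Qed.

Lemma coef_ubound : (forall k : 'I_N, Wp (delta_mx 0 k)) ->
  exists B : C, 0 <= B /\ forall k n, `|((P n)@_(ev k))%:~R : C| <= B.
Proof.
move=> H.
suff: forall s : seq 'I_N, exists B : C, 0 <= B /\
    forall k, k \in s -> forall n, `|((P n)@_(ev k))%:~R : C| <= B.
  move=> /(_ (enum 'I_N)) [B [B0 hB]]; exists B; split => // k n.
  by apply: hB; rewrite mem_enum.
elim=> [|k s [B [B0 hB]]]; first by exists 0; split.
have [Bk hk] := H k.
have Bk0 : 0 <= Bk by apply: le_trans (hk 0%nat); exact: normr_ge0.
exists (Bk + B); split; first exact: addr_ge0.
move=> j; rewrite inE => /orP [/eqP ->|js] n.
  by have := hk n; rewrite dot_delta mxE => h; apply: le_trans h _; rewrite lerDl.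
by apply: le_trans (hB j js n) _; rewrite lerDr.
Qed.

Lemma not_all_units : ~ (forall k : 'I_N, Wp (delta_mx 0 k)).
Proof.
move=> /coef_ubound [B [B0 hB]].
have [b Bb] : exists b : nat, B <= b%:R.
  have /complex_realP [r Br] : B \is Num.real by exact: ger0_real.
  have r0 : 0 <= r by rewrite -ler0c -Br.
  exists (Num.Def.archi_bound r); rewrite Br.
  have -> : ((Num.Def.archi_bound r)%:R : C) = (((Num.Def.archi_bound r)%:R : R)%:C)%C.
    by rewrite -(rmorph_nat (real_complex R)).
  by rewrite lecR ltW // archi_boundP.
have cb k n : leq (absz ((P n)@_(ev k))) b.
  have := le_trans (hB k n) Bb; rewrite -intr_norm -abszE.
  by rewrite pmulrn ler_int.
pose Fn (n : nat) : {ffun 'I_N -> 'I_(b + b).+1} :=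
  [ffun k => inord (absz (shiftz ((P n)@_(ev k)) b))].
have Finj : injective Fn.
  move=> n1 n2 /ffunP e; apply: Pinj; apply/mpolyP => mm.
  case: (ltnP (mdeg mm) d) => [lt|ge].
    pose t : T := BMultinom lt.
    have -> : mm = ev (enum_rank t) by rewrite /ev enum_rankK.
    have := e (enum_rank t); rewrite !ffunE => /(congr1 val).
    rewrite /= !inordK ?ltnS ?shiftz_le //; exact: shiftz_inj (cb _ n1) (cb _ n2).
  rewrite !memN_msupp_eq0 //; apply: msize_mdeg_ge; exact: leq_trans (Pd _) ge.
pose f (i : 'I_(#|{: {ffun 'I_N -> 'I_(b + b).+1}}|).+1) := Fn i.
have finj : injective f by move=> i j /Finj /val_inj.
by have := leq_card _ finj; rewrite card_ord ltnn.
Qed.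

Lemma main_exists : exists xi : 'I_m -> C, alg_indep_Q xi /\
  forall M : Rdefinitions.R, exists n : nat, ((M%:C)%C : C) < `|evalZ (P n) xi|.
Proof.
have [A [QA WA]] := span_exists.
have rA : (\rank A < N)%nat.
  rewrite ltn_neqAle rank_leq_col andbT; apply/negP => /eqP rAN.
  apply: not_all_units => k; apply: QA; apply: submx_full.
  by rewrite /row_full rAN.
pose K := kermx A^T.
have K0 : K != 0.
  rewrite -mxrank_eq0 mxrank_ker mxrank_tr; apply/eqP => /eqP.
  by rewrite subn_eq0 leqNgt rA.
have [i ri] : exists i, row i K != 0.
  case: (pickP (fun i => row i K != 0)) => [i hi|none]; first by exists i.
  case/eqP: K0; apply/row_matrixP => i; rewrite row0.
  by apply/eqP; move: (none i) => /negbFE.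
pose r := row i K.
have rA0 : r *m A^T = 0 by rewrite /r -row_mul mulmx_ker row0.
have orth w : Wp w -> dot w r = 0.
  move=> /WA wA; rewrite /dot -(mulmxKpV wA) -!mulmxA.
  have -> : A *m r^T = 0 by rewrite -[A]trmxK -trmx_mul rA0 trmx0.
  by rewrite !mulmx0 mxE.
have [k0 hk0] : exists k0, r 0 k0 != 0.
  case: (pickP (fun k => r 0 k != 0)) => [k hk|none]; first by exists k.
  case/eqP: ri; apply/rowP => k; move: (none k) => /negbFE/eqP ->.
  by rewrite mxE.
pose F : {mpoly C[m]} := \sum_(k < N) r 0 k *: 'X_[ev k].
have FE x : F.@[x] = dot (monv x) r.
  rewrite /F raddf_sum dotE /=; apply: eq_bigr => k _.
  by rewrite mevalZ mevalX !mxE mulrC.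
have F0 : F != 0.
  apply/eqP => /(congr1 (mcoeff (ev k0))); rewrite mcoeff0 /F raddf_sum /=.
  rewrite (bigD1 k0) //= mcoeffZ mcoeffX eqxx mulr1 big1 ?addr0.
    by move/eqP; rewrite (negbTE hk0).
  by move=> k kk0; rewrite mcoeffZ mcoeffX (inj_eq ev_inj) (negbTE kk0) mulr0.
pose fam (o : option (seq (rat * 'X_{1..m}))) : {mpoly C[m]} :=
  match o with None => F
  | Some s => if build s == 0 then 1 else map_mpoly (ratr : rat -> C) (build s) end.
have famnz o : fam o != 0.
  case: o => [s|//] /=; case: ifP => [_|/negbT]; first by rewrite oner_eq0.
  exact: map_ratr_neq0.
have [x hx] := avoid famnz.
exists x; split.
  move=> p p0; have := hx (Some [seq (p@_mm, mm) | mm <- msupp p]).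
  by rewrite /= build_eq (negbTE p0).
move=> M; apply: Classical_Prop.NNPP => H.
have hb n : `|evalZ (P n) x| <= (M%:C)%C.
  have Mr : ((M%:C)%C : C) \is Num.real by apply/complex_realP; exists M.
  rewrite real_leNgt ?normr_real //; apply/negP => h; apply: H; by exists n.
have Wx : Wp (monv x) by exists (M%:C)%C => n; rewrite -evalZ_dot.
by move: (hx None) => /=; rewrite FE orth // eqxx.
Qed.

End Main.

(* msize p = 1 + total degree of p (0 for p = 0). *)
Theorem proposition2p6 (m : nat) (P : nat -> {mpoly int[m]}) :
  injective P ->
  (exists d : nat, forall n, leq (msize (P n)) d) ->
  exists xi : 'I_m -> C,
    alg_indep_Q xi /\
    forall M : Rdefinitions.R, exists n : nat, ((M%:C)%C : C) < (`|evalZ (P n) xi| : C).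
Proof.
move=> Pinj [d Pd]; exact: main_exists Pinj Pd.
Qed.
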